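(* Let $\mathfrak a$ be an ideal of a commutative ring $R$. (1) Let $f,g_1,\dots,g_k\in R[X]$ be monic with $f=g_1\cdots g_k$. If each $g_i$ is $\mathfrak a$-Weierstrass, then $f$ is $\mathfrak a$-Weierstrass. (2) Let $f,g_1,\dots,g_k\in R[[X]]$ with $f=g_1\cdots g_k$ and let $n\ge0$. If each $g_i$ is $\mathfrak a$-distinguished of order $n_i$ for some integers $n_i\ge0$ with $n=n_1+\cdots+n_k$, then $f$ is $\mathfrak a$-distinguished of order $n$. Moreover, if $\mathfrak a$ is prime, the converses of (1) and (2) hold: in (1), if $f$ is $\mathfrak a$-Weierstrass then each $g_i$ is $\mathfrak a$-Weierstrass; in (2), if $f$ is $\mathfrak a$-distinguished of order $n$ then each $g_i$ is $\mathfrak a$-distinguished of some order $n_i$ with $n=n_1+\cdots+n_k$.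
   Context: A polynomial $f\in R[X]$ is $\mathfrak a$-Weierstrass if it is monic and its coefficients of $X^i$ for $i<\deg f$ lie in $\mathfrak a$. A series $f\in R[[X]]$ is $\mathfrak a$-distinguished of order $n$ if the coefficient of $X^n$ is a unit modulo $\mathfrak a$ and the coefficients of $X^i$ for $i<n$ lie in $\mathfrak a$. *)

(* Defs.v *)
From HB Require Import structures.
From mathcomp Require Import all_boot all_order all_algebra.
Set Implicit Arguments. Unset Strict Implicit. Unset Printing Implicit Defensive.
Import GRing.Theory.
Local Open Scope ring_scope.

(* An ideal of a commutative ring R, given as a predicate (not necessarily
   proper: a = R is allowed, as in the paper). *)
Definition is_ideal (R : comNzRingType) (a : {pred R}) : Prop :=
  [/\ 0 \in a,
      (forall x y, x \in a -> y \in a -> x + y \in a) &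
      (forall r x, x \in a -> r * x \in a)].

Definition is_prime_ideal (R : comNzRingType) (a : {pred R}) : Prop :=
  [/\ is_ideal a, 1 \notin a & prime_idealr_closed a].

Definition unit_mod (R : comNzRingType) (a : {pred R}) (c : R) : Prop :=
  exists u : R, c * u - 1 \in a.

Definition weierstrass (R : comNzRingType) (a : {pred R}) (f : {poly R}) : Prop :=
  f \is monic /\ (forall i, (i < (size f).-1)%N -> f`_i \in a).

Definition powser (R : comNzRingType) := nat -> R.

Definition ps_one (R : comNzRingType) : powser R := fun n => (n == 0)%:R.

Definition ps_mul (R : comNzRingType) (f g : powser R) : powser R :=
  fun n => \sum_(i < n.+1) f i * g (n - i)%N.

Definition distinguished (R : comNzRingType) (a : {pred R}) (f : powser R) (n : nat)
  : Prop :=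
  unit_mod a (f n) /\ (forall i, (i < n)%N -> f i \in a).

(* Main.v *)
Require Import Defs.
From HB Require Import structures.
From mathcomp Require Import all_boot all_order all_algebra.
From mathcomp Require Import zify ring.
Import GRing.Theory.
Local Open Scope ring_scope.

Section H.
Variable R : comNzRingType.
Variable a : {pred R}.
Hypothesis ha : is_ideal a.

Lemma id0 : 0 \in a. Proof. by case: ha. Qed.
Lemma idD x y : x \in a -> y \in a -> x + y \in a. Proof. by case: ha => _ h _; apply: h. Qed.
Lemma idMl r x : x \in a -> r * x \in a. Proof. by case: ha => _ _ h; apply: h. Qed.
Lemma idMr r x : x \in a -> x * r \in a. Proof. by rewrite mulrC; apply: idMl. Qed.
Lemma idN x : x \in a -> - x \in a. Proof. by move=> h; rewrite -mulN1r; apply: idMl. Qed.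
Lemma idB x y : x \in a -> y \in a -> x - y \in a. Proof. by move=> hx hy; apply: idD => //; apply: idN. Qed.

Lemma idsum (n : nat) (P : pred 'I_n) (F : 'I_n -> R) :
  (forall i, P i -> F i \in a) -> \sum_(i < n | P i) F i \in a.
Proof.
move=> h; apply: (big_ind (fun x => x \in a)) => //; [exact: id0 | exact: idD].
Qed.

Definition conv (p q : nat -> R) i := \sum_(j < i.+1) p j * q (i - j)%N.

Lemma convL p q m l i : (forall j, (j < m)%N -> p j \in a) ->
  (forall j, (j < l)%N -> q j \in a) -> (i < m + l)%N -> conv p q i \in a.
Proof.
move=> hp hq hi; apply: idsum => j _.
case: (ltnP j m) => hj; first by apply: idMr; apply: hp.
apply: idMl; apply: hq; have := ltn_ord j; lia.
Qed.

Lemma convLead p q m l : (forall j, (j < m)%N -> p j \in a) ->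
  (forall j, (j < l)%N -> q j \in a) -> conv p q (m + l) - p m * q l \in a.
Proof.
move=> hp hq; rewrite /conv.
have hm : (m < (m + l).+1)%N by lia.
rewrite (bigD1 (Ordinal hm)) //= addKn.
rewrite [X in X - _]addrC addrK.
apply: idsum => j hj.
have hj' : nat_of_ord j != m.
  apply: contra hj => /eqP h; apply/eqP/val_inj => /=; exact: h.
case: (ltnP j m) => hjm; first by apply: idMr; apply: hp.
apply: idMl; apply: hq; have := ltn_ord j; move: hj' hjm; lia.
Qed.

Lemma um_of c d : unit_mod a c -> c - d \in a -> unit_mod a d.
Proof.
move=> [u hu] h; exists u.
have -> : d * u - 1 = (c * u - 1) - (c - d) * u by ring.
by apply: idB => //; apply: idMr.
Qed.

Lemma um_mul c d : unit_mod a c -> unit_mod a d -> unit_mod a (c * d).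
Proof.
move=> [u hu] [v hv]; exists (u * v).
have -> : c * d * (u * v) - 1 = (c * u - 1) * (d * v) + (d * v - 1) by ring.
by apply: idD => //; apply: idMr.
Qed.

Lemma um_l c d : unit_mod a (c * d) -> unit_mod a c.
Proof. by move=> [u hu]; exists (d * u); rewrite mulrA. Qed.

Lemma um_r c d : unit_mod a (c * d) -> unit_mod a d.
Proof. by rewrite mulrC; apply: um_l. Qed.

Lemma um_notin c : 1 \notin a -> unit_mod a c -> c \notin a.
Proof.
move=> h1 [u hu]; apply: contra h1 => hc.
have -> : 1 = c * u - (c * u - 1) by ring.
by apply: idB => //; apply: idMr.
Qed.

Lemma prime_notin (hp : is_prime_ideal a) u v :
  u \notin a -> v \notin a -> u * v \notin a.
Proof.
case: hp => _ _ hpr hu hv; apply/negP => /hpr /orP [] h.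
  by rewrite h in hu. by rewrite h in hv.
Qed.

Lemma convPrime (hp : is_prime_ideal a) p q m l :
  (forall j, (j < m)%N -> p j \in a) -> p m \notin a ->
  (forall j, (j < l)%N -> q j \in a) -> q l \notin a ->
  conv p q (m + l) \notin a.
Proof.
move=> h1 h2 h3 h4; apply/negP => hc.
have := @prime_notin hp _ _ h2 h4; apply/negP/negPn.
have -> : p m * q l = conv p q (m + l) - (conv p q (m + l) - p m * q l) by ring.
by apply: idB => //; apply: convLead.
Qed.

Lemma convAll p q i : (forall j, p j \in a) -> conv p q i \in a.
Proof. by move=> h; apply: (@convL p q i.+1 0) => [j _|j //|]; [exact: h|rewrite addn0]. Qed.

Lemma convAllr p q i : (forall j, q j \in a) -> conv p q i \in a.
Proof. by move=> h; apply: (@convL p q 0 i.+1) => [j //|j _|]; [exact: h|]. Qed.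


Lemma notin1 (hp : is_prime_ideal a) : 1 \notin a.
Proof. by case: hp. Qed.

Lemma lowP (p : nat -> R) (exP : exists j, p j \notin a) :
  exists m, [/\ p m \notin a & forall j, (j < m)%N -> p j \in a] /\
     forall j, p j \notin a -> (m <= j)%N.
Proof.
case: (ex_minnP exP) => m hm hmin; exists m; split => //; split => // j hj.
by apply/negPn/negP => h; have := hmin j h; lia.
Qed.

Lemma distFwd k (g : 'I_k -> powser R) ns :
  (forall i, distinguished a (g i) (ns i)) ->
  distinguished a (\big[@ps_mul R/ps_one R]_(i < k) g i) (\sum_(i < k) ns i).
Proof.
elim: k g ns => [|k IH] g ns hg.
  rewrite !big_ord0; split => //; exists 1; rewrite /ps_one /= mulr1 subrr; exact: id0.
rewrite big_ord_recl big_ord_recl.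
set p := g ord0; set Q := \big[_/_]_(i < k) _.
have [u0 l0] := hg ord0.
have [uQ lQ] := IH (fun i => g (lift ord0 i)) (fun i => ns (lift ord0 i)) (fun i => hg _).
split.
  change (unit_mod a (conv p Q (ns ord0 + \sum_(i < k) ns (lift ord0 i)))).
  apply: (@um_of (p (ns ord0) * Q (\sum_(i < k) ns (lift ord0 i)))).
    exact: um_mul.
  by rewrite -opprB; apply: idN; apply: convLead.
by move=> i hi; change (conv p Q i \in a); exact: (convL _ _ _ _ _ l0 lQ hi).
Qed.

Lemma distBwd (hp : is_prime_ideal a) k : forall (g : 'I_k -> powser R) n,
  distinguished a (\big[@ps_mul R/ps_one R]_(i < k) g i) n ->
  exists ns : 'I_k -> nat,
    n = (\sum_(i < k) ns i)%N /\ forall i, distinguished a (g i) (ns i).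
Proof.
have h1 := notin1 hp.
elim: k => [|k IH] g n [hu hl].
  case: n hu hl => [|n] hu hl.
    by exists (fun _ => 0%N); split; [rewrite big_ord0 | case].
  by move: (hl 0%N erefl); rewrite big_ord0 /ps_one /= (negPf h1).
move: hu hl; rewrite big_ord_recl.
set p := g ord0; set Q := \big[_/_]_(i < k) _ => hu hl.
have hn := um_notin _ h1 hu.
have exP : exists j, p j \notin a.
  case: (boolP [exists j : 'I_n.+1, p j \notin a]) => [/existsP [j hj]|/existsPn hn']; first by exists j.
  exfalso; move/negP: hn; apply.
  apply: (@convL p Q n.+1 0) => [j hj|j //|]; [by move: (hn' (Ordinal hj)) => /negPn | by rewrite addn0].
have exQ : exists j, Q j \notin a.
  case: (boolP [exists j : 'I_n.+1, Q j \notin a]) => [/existsP [j hj]|/existsPn hn']; first by exists j.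
  exfalso; move/negP: hn; apply.
  by apply: (@convL p Q 0 n.+1) => [j //|j hj|]; [move: (hn' (Ordinal hj)) => /negPn |].
have [m [[pm lowp] _]] := lowP _ exP.
have [l [[Ql lowQ] _]] := lowP _ exQ.
have hc := convPrime hp _ _ _ _ lowp pm lowQ Ql.
have en : n = (m + l)%N.
  case: (ltngtP n (m + l)) => // h.
    by exfalso; move/negP: hn; apply; change (conv p Q n \in a); apply: (convL _ _ _ _ _ lowp lowQ h).
  by exfalso; move/negP: hc; apply; apply: hl.
subst n.
have hu' : unit_mod a (p m * Q l).
  apply: (um_of _ _ hu); exact: (convLead _ _ _ _ lowp lowQ).
have [ns' [e' hns']] := IH (fun i => g (lift ord0 i)) l (conj (um_r _ _ hu') lowQ).
exists (fun i => if unlift ord0 i is Some j then ns' j else m); split.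
  rewrite big_ord_recl unlift_none e'; congr (_ + _)%N.
  by apply: eq_bigr => i _; rewrite liftK.
move=> i; case: (unliftP ord0 i) => [j ->|->]; first exact: hns'.
by split => //; apply: um_l _ _ hu'.
Qed.

Lemma polyFwd k (g : 'I_k -> {poly R}) :
  (forall i, weierstrass a (g i)) -> weierstrass a (\prod_(i < k) g i).
Proof.
elim: k g => [|k IH] g hg.
  by rewrite big_ord0; split; [exact: monic1 | rewrite size_poly1].
rewrite big_ord_recl.
set p := g ord0; set Q := \prod_(i < k) _.
have [hm1 hl1] := hg ord0.
have [hm2 hl2] := IH _ (fun i => hg (lift ord0 i)).
split; first by rewrite monicMl.
have s1 := monic_neq0 hm1; have s2 := monic_neq0 hm2.
rewrite -size_poly_gt0 in s1; rewrite -size_poly_gt0 in s2.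
rewrite size_monicM ?monic_neq0 // => i hi; rewrite coefM.
change (conv (fun j => p`_j) (fun j => Q`_j) i \in a).
apply: (@convL _ _ (size p).-1 (size Q).-1) => //; lia.
Qed.

Lemma polyTwo (hp : is_prime_ideal a) (p Q : {poly R}) :
  p \is monic -> Q \is monic ->
  (forall i, (i < (size (p * Q)%R).-1)%N -> (p * Q)`_i \in a) ->
  weierstrass a p /\ weierstrass a Q.
Proof.
move=> hm1 hm2 hl.
have h1 := notin1 hp.
have exP : exists j, p`_j \notin a.
  by exists (size p).-1; rewrite -lead_coefE (monicP hm1).
have exQ : exists j, Q`_j \notin a.
  by exists (size Q).-1; rewrite -lead_coefE (monicP hm2).
have [m [[pm lowp] minp]] := lowP _ exP.
have [l [[Ql lowQ] minQ]] := lowP _ exQ.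
have hmp : (m <= (size p).-1)%N by apply: minp; rewrite -lead_coefE (monicP hm1).
have hlQ : (l <= (size Q).-1)%N by apply: minQ; rewrite -lead_coefE (monicP hm2).
have hc := convPrime hp _ _ _ _ lowp pm lowQ Ql.
have s1 := monic_neq0 hm1; have s2 := monic_neq0 hm2.
rewrite -size_poly_gt0 in s1; rewrite -size_poly_gt0 in s2.
have e : ~ (m + l < (size p).-1 + (size Q).-1)%N.
  move=> h; move/negP: hc; apply.
  have := hl (m + l)%N; rewrite coefM size_monicM ?monic_neq0 //; apply; lia.
have em : m = (size p).-1 by lia.
have el : l = (size Q).-1 by lia.
split; split => // i hi; [apply: lowp; lia | apply: lowQ; lia].
Qed.

Lemma polyBwd (hp : is_prime_ideal a) k : forall (g : 'I_k -> {poly R}),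
  (forall i, g i \is monic) -> weierstrass a (\prod_(i < k) g i) ->
  forall i, weierstrass a (g i).
Proof.
elim: k => [|k IH] g hmon hw i; first by case: i.
move: hw; rewrite big_ord_recl => -[_ hl].
have hQ : \prod_(i < k) g (lift ord0 i) \is monic by apply: monic_prod.
have [w1 w2] := polyTwo hp _ _ (hmon ord0) hQ hl.
case: (unliftP ord0 i) => [j ->|-> //].
exact: (IH (fun i => g (lift ord0 i))).
Qed.

End H.

Theorem lemma3p10 (R : comNzRingType) (a : {pred R}) (ha : is_ideal a) :
  (* (1) and its converse for prime a *)
  (forall (k : nat) (f : {poly R}) (g : 'I_k -> {poly R}),
      f \is monic -> (forall i, g i \is monic) -> f = \prod_(i < k) g i ->
      ((forall i, weierstrass a (g i)) -> weierstrass a f) /\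
      (is_prime_ideal a -> weierstrass a f -> forall i, weierstrass a (g i))) /\
  (* (2) and its converse for prime a *)
  (forall (k : nat) (f : powser R) (g : 'I_k -> powser R) (n : nat),
      f = \big[@ps_mul R/ps_one R]_(i < k) g i ->
      ((exists ns : 'I_k -> nat,
          n = (\sum_(i < k) ns i)%N /\ forall i, distinguished a (g i) (ns i)) ->
        distinguished a f n) /\
      (is_prime_ideal a -> distinguished a f n ->
        exists ns : 'I_k -> nat,
          n = (\sum_(i < k) ns i)%N /\ forall i, distinguished a (g i) (ns i))).
Proof.
split.
  move=> k f g hf hg ->; split; first exact: polyFwd.
  by move=> hp hw; apply: polyBwd.
move=> k f g n ->; split; first by move=> [ns [-> h]]; apply: distFwd.
by move=> hp hd; apply: distBwd.
Qed.
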